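(* Let $A,B\in\mathbb{N}$ with $A\ge B$ and let $p\in[0,1]$. For $i\in\{1,\dots,B\}$ let $X_i\sim\mathrm{Bin}(A-i,p)$. Then $i\mapsto \mathbb{P}(X_i\ge B-i)$ is a (non-strictly) increasing function on $\{1,\dots,B\}$.
   Context: $\mathrm{Bin}(n,p)$ denotes the binomial distribution with $n$ trials and success probability $p$. *)

(* Defs.v *)
From HB Require Import structures.
From mathcomp Require Import all_boot all_order all_algebra.
From mathcomp Require Import all_classical all_reals all_analysis.
Set Implicit Arguments. Unset Strict Implicit. Unset Printing Implicit Defensive.

(* Main.v *)
Require Import Defs.
From HB Require Import structures.
From mathcomp Require Import all_boot all_order all_algebra.
From mathcomp Require Import all_classical all_reals all_analysis.
From mathcomp Require Import ring.
Import Order.TTheory GRing.Theory Num.Theory.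
Local Open Scope classical_set_scope.
Local Open Scope ring_scope.

Section S.
Variables (R : realType) (p : R).
Hypothesis p0 : 0 <= p.
Hypothesis p1 : p <= 1.

Definition g n m k : R := if (m <= k)%N then binomial_pmf n p k else 0.

Lemma pmf_ge0 n k : 0 <= binomial_pmf n p k.
Proof. by apply: binomial_pmf_ge0; rewrite p0 p1. Qed.

Lemma g_ge0 n m k : 0 <= g n m k.
Proof. rewrite /g; case: ifP => // _; exact: pmf_ge0. Qed.

Lemma pmf_big n k : (n < k)%N -> binomial_pmf n p k = 0.
Proof. by move=> nk; rewrite /binomial_pmf bin_small // mulr0n. Qed.

Lemma pascal n k : binomial_pmf n.+1 p k.+1 =
  p * binomial_pmf n p k + (1 - p) * binomial_pmf n p k.+1.
Proof.
rewrite /binomial_pmf binS mulrnDr addrC; congr (_ + _).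
  case: (leqP k n) => kn.
    by rewrite subSS exprS -!mulrnAr mulrA.
  by rewrite bin_small // !mulr0n mulr0.
case: (ltnP k n) => kn.
  rewrite subSS -(subnSK kn) exprS mulrnAr; congr (_ *+ _); rewrite /unstable.onem exprS; ring.


by rewrite bin_small ?ltnS // !mulr0n mulr0.
Qed.

Lemma step n m : \sum_(k < n.+2) g n.+1 m.+1 k <= \sum_(k < n.+1) g n m k.
Proof.
rewrite big_ord_recl /= {1}/g /= add0r.
apply: (@le_trans _ _ (\sum_(k < n.+1) (p * g n m k + (1 - p) * g n m k.+1))).
  apply: ler_sum => k _; rewrite /bump /= add1n /g ltnS pascal.
  case: ifP => mk; first by rewrite (leqW mk).
  by rewrite mulr0 add0r; case: ifP => _; rewrite ?mulr0 // mulr_ge0 ?subr_ge0 ?pmf_ge0.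
rewrite big_split /= -!mulr_sumr.
set T := \sum_(k < n.+1) g n m k.
have H : \sum_(i < n.+1) g n m i.+1 <= T.
  have -> : T = \sum_(k < n.+2) g n m k.
    rewrite big_ord_recr /= {2}/g pmf_big // if_same addr0 //.
  rewrite [X in _ <= X]big_ord_recl /=; apply: ler_wpDl; first exact: g_ge0.
  by apply: ler_sum => i _; rewrite /bump /= add1n.
apply: (@le_trans _ _ (p * T + (1 - p) * T)).
  by rewrite lerD2l ler_wpM2l // subr_ge0.
by rewrite -mulrDl addrC subrK mul1r.
Qed.

Lemma conv n m : binomial_prob n p [set k : nat | (m <= k)%N] =
   (\sum_(k < n.+1) g n m k)%:E.
Proof.
rewrite (@binomial_probE R n p p0 p1) sumEFin; congr (_%:E).
apply: eq_bigr => k _ /=; rewrite indicE /g. 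
case: ifP => mk.
  by rewrite mem_set // mulr1.
by rewrite memNset ?mulr0 //= mk.
Qed.
End S.

Theorem lemma7 (R : realType) (A B : nat) (p : R) :
  (B <= A)%N -> 0 <= p <= 1 ->
  forall i j : nat, (1 <= i)%N -> (i <= j)%N -> (j <= B)%N ->
    (binomial_prob (A - i) p [set k : nat | (B - i <= k)%N]
     <= binomial_prob (A - j) p [set k : nat | (B - j <= k)%N])%E.
Proof.
move=> BA /andP[p0 p1] i j _ ij jB.
have H1 : forall l, (l.+1 <= B)%N ->
  (binomial_prob (A - l) p [set k : nat | (B - l <= k)%N]
     <= binomial_prob (A - l.+1) p [set k : nat | (B - l.+1 <= k)%N])%E.
  move=> l lB.
  rewrite !(@conv R p p0 p1) lee_fin.
  have e1 : (A - l = (A - l.+1).+1)%N by rewrite subnSK // (leq_trans lB BA).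
  have e2 : (B - l = (B - l.+1).+1)%N by rewrite subnSK.
  rewrite e1 e2; exact: step.
move: jB; rewrite -(subnKC ij); move: (j - i)%N => d.
elim: d => [|d IH]; first by rewrite addn0.
move=> h; rewrite addnS in h *.
have h' : (i + d <= B)%N by apply: ltnW.
move: (IH h') (H1 _ h) => a b.
exact: (le_trans a b).
Qed.
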